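(* Let $\mathcal{S}$ be a subset of $\mathbb{P}^2(\mathbb{F}_q)$ with $|\mathcal{S}|=q+2$, and suppose there is some $P\in\mathcal{S}$ such that no line through $P$ contains at least three points of $\mathcal{S}$. Then after a suitable change of projective coordinates, $\mathcal{S}=\mathcal{S}_f$ for some $f(X)\in\mathbb{F}_q[X]$. Moreover, if there are two such points $P\in\mathcal{S}$, then after a suitable change of coordinates $\mathcal{S}=\mathcal{S}_f$ for some $f(X)\in\mathbb{F}_q[X]$ which permutes $\mathbb{F}_q$.
   Context: $q$ is a prime power. For $f(X)\in\mathbb{F}_q[X]$, $\mathcal{S}_f:=\{(c:f(c):1):c\in\mathbb{F}_q\}\cup\{(1:0:0),(0:1:0)\}\subseteq\mathbb{P}^2(\mathbb{F}_q)$. A polynomial permutes $\mathbb{F}_q$ if the map $c\mapsto f(c)$ is a bijection $\mathbb{F}_q\to\mathbb{F}_q$. *)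

(* Defs.v *)
From HB Require Import structures.
From mathcomp Require Import all_boot all_order all_algebra all_field.
Set Implicit Arguments. Unset Strict Implicit. Unset Printing Implicit Defensive.
Import GRing.Theory.
Local Open Scope ring_scope.

(* Points of P^2(F) are represented by their unique normalized homogeneous
   coordinate row vector (x0 : x1 : x2): nonzero, with LAST nonzero coordinate 1. *)
Definition pnormal (F : finFieldType) (v : 'rV[F]_3) : bool :=
  [exists i : 'I_3, (v 0 i == 1) && [forall j : 'I_3, (i < j)%N ==> (v 0 j == 0)]].

Definition P2 (F : finFieldType) := {v : 'rV[F]_3 | pnormal v}.

Definition mk3 (F : finFieldType) (a b c : F) : 'rV[F]_3 :=
  \row_(i < 3) nth 0 [:: a; b; c] i.

Definition peq (F : finFieldType) (u v : 'rV[F]_3) : bool :=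
  [exists k : F, (k != 0) && (u == k *: v)].

Definition pline (F : finFieldType) (l : 'cV[F]_3) : {set P2 F} :=
  [set x : P2 F | val x *m l == 0].

Definition pimage (F : finFieldType) (A : 'M[F]_3) (S : {set P2 F}) : {set P2 F} :=
  [set x : P2 F | [exists y in S, peq (val y *m A) (val x)]].

Definition no_trisecant_through (F : finFieldType) (S : {set P2 F}) (P : P2 F) : Prop :=
  forall l : 'cV[F]_3, l != 0 -> P \in pline l -> (#|S :&: pline l| < 3)%N.

Definition Sf (F : finFieldType) (f : {poly F}) : {set P2 F} :=
  [set x : P2 F | [|| [exists c : F, val x == mk3 c f.[c] 1],
                      val x == mk3 1 0 0 | val x == mk3 0 1 0]].

(* Main.v *)
Require Import Defs.
From HB Require Import structures.
From mathcomp Require Import all_boot all_order all_algebra all_field ring.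
Set Implicit Arguments. Unset Strict Implicit. Unset Printing Implicit Defensive.
Import GRing.Theory.
Local Open Scope ring_scope.

Section H.
Variable F : finFieldType.

Lemma mk3E (a b c : F) (j : 'I_3) : mk3 a b c 0 j = nth 0 [:: a; b; c] j.
Proof. by rewrite /mk3 mxE. Qed.

Lemma row3 (u : 'rV[F]_3) : u = mk3 (u 0 0) (u 0 1) (u 0 2).
Proof.
apply/rowP=> j; rewrite mk3E; case: j => [[|[|[|//]]] Hj] /=;
by congr (u 0 _); apply: val_inj.
Qed.

Lemma pnormal_scale (u v : 'rV[F]_3) k : pnormal u -> pnormal v -> u = k *: v -> u = v.
Proof.
move=> /existsP[i /andP[/eqP ui /forallP hu]] /existsP[j /andP[/eqP vj /forallP hv]] ue.
have ue' m : u 0 m = k * v 0 m by rewrite ue mxE.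
case: (ltngtP i j) => h.
- move: (hu j); rewrite h /= ue' vj mulr1 => /eqP k0.
  by move: ui; rewrite ue' k0 mul0r => /eqP; rewrite eq_sym oner_eq0.
- move: (hv i); rewrite h /= => /eqP vi.
  by move: ui; rewrite ue' vi mulr0 => /eqP; rewrite eq_sym oner_eq0.
- have ij : i = j by apply: val_inj.
  move: ui; rewrite ue' ij vj mulr1 => k1.
  by rewrite ue k1 scale1r.
Qed.

Lemma peq_normal (w u x : 'rV[F]_3) k : pnormal u -> pnormal x -> peq w x -> w = k *: u -> x = u.
Proof.
move=> nu nx /existsP[k' /andP[k'0 /eqP wx]] wu.
apply: (pnormal_scale (k := k'^-1 * k)) => //.
by rewrite -scalerA -wu wx scalerA mulVf // scale1r.
Qed.

Lemma pnormal_mk3 (a b : F) : pnormal (mk3 a b 1).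
Proof.
apply/existsP; exists 2; rewrite mk3E /= eqxx /=; apply/forallP => j.
case: j => [[|[|[|k]]] Hj] /=; by [].
Qed.

Lemma pnormal_e1 : pnormal (mk3 (1 : F) 0 0).
Proof.
apply/existsP; exists 0; rewrite mk3E /= eqxx /=; apply/forallP => j.
rewrite mk3E; case: j => [[|[|[|k]]] Hj] /=; by [].
Qed.

Lemma pnormal_e2 : pnormal (mk3 (0 : F) 1 0).
Proof.
apply/existsP; exists 1; rewrite mk3E /= eqxx /=; apply/forallP => j.
rewrite mk3E; case: j => [[|[|[|k]]] Hj] /=; by [].
Qed.

Definition col3 (a b c : F) : 'cV[F]_3 := \col_(i < 3) nth 0 [:: a; b; c] i.

Lemma mul_col3 (w : 'rV[F]_3) a b c :
  w *m col3 a b c = (w 0 0 * a + w 0 1 * b + w 0 2 * c)%:M.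
Proof.
apply/matrixP => i j; rewrite !ord1 !mxE /= !big_ord_recl big_ord0 !mxE /= addr0 mulr1n.
by rewrite addrA; congr (_ + _ * _ + _ * _); congr (w 0 _); apply: val_inj.
Qed.

Lemma in_pline (A : 'M[F]_3) (x : P2 F) a b c :
  (x \in pline (A *m col3 a b c)) =
  ((val x *m A) 0 0 * a + (val x *m A) 0 1 * b + (val x *m A) 0 2 * c == 0).
Proof.
rewrite inE mulmxA mul_col3.
apply/eqP/eqP => [/matrixP/(_ 0 0)|->]; first by rewrite !mxE /= mulr1n.
by apply/matrixP => i j; rewrite !ord1 !mxE /= mulr1n.
Qed.

End H.

Lemma det3 (F : comRingType) (M : 'M[F]_3) : \det M =
  M 0 0 * (M 1 1 * M 2 2 - M 1 2 * M 2 1) - M 0 1 * (M 1 0 * M 2 2 - M 1 2 * M 2 0)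
  + M 0 2 * (M 1 0 * M 2 1 - M 1 1 * M 2 0).
Proof.
rewrite (expand_det_row _ 0) !big_ord_recl big_ord0 /cofactor.
rewrite !(expand_det_row _ 0) !big_ord_recl !big_ord0 /cofactor !det_mx11 !mxE /=.
pose m (i j : nat) := M (inord i) (inord j).
have E x y : M x y = m x y by rewrite /m !inord_val.
rewrite !E /=.
rewrite /bump /=.
ring.
Qed.


Section H2.
Variable F : finFieldType.

Definition mk3M (q p r : 'rV[F]_3) : 'M[F]_3 :=
  \matrix_(i < 3, j < 3) nth 0 [:: q 0 j; p 0 j; r 0 j] i.

Lemma delta_mk3 (i : 'I_3) : delta_mx 0 i = mk3 (i == 0 :> nat)%:R (i == 1 :> nat)%:R (i == 2 :> nat)%:R :> 'rV[F]_3.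
Proof.
apply/rowP => j; rewrite mxE mk3E /=.
by case: j => [[|[|[|k]]] Hj] //=; case: i => [[|[|[|k']]] Hi].
Qed.

Lemma frame_aux (p q r : 'rV[F]_3) (i : 'I_3) : mk3M q p r \in unitmx ->
  row i (mk3M q p r) *m invmx (mk3M q p r) = delta_mx 0 i.
Proof. by move=> U; rewrite rowE mulmxK. Qed.

Lemma frame (p q : 'rV[F]_3) : pnormal p -> pnormal q -> p != q ->
  exists A : 'M[F]_3, [/\ A \in unitmx, q *m A = mk3 1 0 0 & p *m A = mk3 0 1 0].
Proof.
move=> np nq pq.
suff [r Ur] : exists r, mk3M q p r \in unitmx.
  exists (invmx (mk3M q p r)); split; first by rewrite unitmx_inv.
  - have h : row 0 (mk3M q p r) = q by apply/rowP => j; rewrite !mxE.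
    by rewrite -{1}h frame_aux // delta_mk3.
  - have h : row 1 (mk3M q p r) = p by apply/rowP => j; rewrite !mxE.
    by rewrite -{1}h frame_aux // delta_mk3.
have detE r : \det (mk3M q p r) = r 0 0 * (q 0 1 * p 0 2 - q 0 2 * p 0 1)
   - r 0 1 * (q 0 0 * p 0 2 - q 0 2 * p 0 0) + r 0 2 * (q 0 0 * p 0 1 - q 0 1 * p 0 0).
  rewrite det3 !mxE /=; ring.
have [c0|c0] := eqVneq (q 0 1 * p 0 2 - q 0 2 * p 0 1) 0; last first.
  exists (mk3 1 0 0); rewrite unitmxE detE !mk3E /= unitfE.
  by rewrite !mul0r subr0 addr0 mul1r.
have [c1|c1] := eqVneq (q 0 0 * p 0 2 - q 0 2 * p 0 0) 0; last first.
  exists (mk3 0 1 0); rewrite unitmxE detE !mk3E /= unitfE.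
  by rewrite !mul0r sub0r addr0 mul1r oppr_eq0.
have [c2|c2] := eqVneq (q 0 0 * p 0 1 - q 0 1 * p 0 0) 0; last first.
  exists (mk3 0 0 1); rewrite unitmxE detE !mk3E /= unitfE.
  by rewrite !mul0r subr0 add0r mul1r.
exfalso; move/negP: pq; apply; apply/eqP.
move: (nq) => /existsP[i /andP[/eqP qi /forallP hq]].
move: c0 c1 c2 => /eqP; rewrite subr_eq0 => /eqP c0 /eqP; rewrite subr_eq0 => /eqP c1 /eqP; rewrite subr_eq0 => /eqP c2.
have key : exists k, p = k *: q.
  case: i qi hq => [[|[|[|//]]] Hi] qi hq.
  - have e0 : q 0 0 = 1 by rewrite -qi; congr (q 0 _); apply: val_inj.
    have /eqP e1 := hq 1; have /eqP e2 := hq 2.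
    exists (p 0 0); apply/rowP => j; rewrite mxE.
    case: j => [[|[|[|//]]] Hj].
    + by rewrite (_ : Ordinal Hj = 0); last exact: val_inj; rewrite e0 mulr1.
    + rewrite (_ : Ordinal Hj = 1); last exact: val_inj; rewrite e1 mulr0.
      by move: c2; rewrite e0 e1 mul0r mul1r.
    + rewrite (_ : Ordinal Hj = 2); last exact: val_inj; rewrite e2 mulr0.
      by move: c1; rewrite e0 e2 mul0r mul1r.
  - have e1 : q 0 1 = 1 by rewrite -qi; congr (q 0 _); apply: val_inj.
    have /eqP e2 := hq 2.
    exists (p 0 1); apply/rowP => j; rewrite mxE.
    case: j => [[|[|[|//]]] Hj].
    + by rewrite (_ : Ordinal Hj = 0); last exact: val_inj; rewrite e1 mul1r in c2; rewrite -c2 mulrC.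
    + by rewrite (_ : Ordinal Hj = 1); last exact: val_inj; rewrite e1 mulr1.
    + rewrite (_ : Ordinal Hj = 2); last exact: val_inj; rewrite e2 mulr0.
      by move: c0; rewrite e1 e2 mul0r mul1r.
  - have e2 : q 0 2 = 1 by rewrite -qi; congr (q 0 _); apply: val_inj.
    exists (p 0 2); apply/rowP => j; rewrite mxE.
    case: j => [[|[|[|//]]] Hj].
    + by rewrite (_ : Ordinal Hj = 0); last exact: val_inj; rewrite e2 mul1r in c1; rewrite -c1 mulrC.
    + by rewrite (_ : Ordinal Hj = 1); last exact: val_inj; rewrite e2 mul1r in c0; rewrite -c0 mulrC.
    + by rewrite (_ : Ordinal Hj = 2); last exact: val_inj; rewrite e2 mulr1.
have [k pk] := key.
exact: pnormal_scale np nq pk.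
Qed.
End H2.


Lemma interp (F : finFieldType) (g : F -> F) : exists f : {poly F}, forall c, f.[c] = g c.
Proof.
have cardF : (0 < #|F|.-1)%N.
  have : (1 < #|F|)%N.
    rewrite (cardD1 (0 : F)) (cardD1 (1 : F)) !inE oner_eq0 /=; by [].
  by case: #|F| => [|[|n]].
have pw (x : F) : x ^+ #|F|.-1 = (x != 0)%:R.
  have [->|x0] := eqVneq x 0; first by rewrite expr0n; case: #|F|.-1 cardF.
  apply: (mulIf x0); rewrite /= mul1r -exprSr prednK ?expf_card //.
  by move: cardF; case: #|F|.
exists (\sum_(a : F) (g a)%:P * (1 - ('X - a%:P) ^+ #|F|.-1)).
move=> c; rewrite horner_sum (bigD1 c) //= big1 ?addr0.
  by rewrite hornerE !hornerE subrr pw eqxx subr0 mulr1.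
move=> a ac; rewrite !hornerE pw subr_eq0 eq_sym ac subrr mulr0 //.
Qed.


Section Main.
Variable F : finFieldType.
Implicit Types S : {set P2 F}.

Lemma three S l (a b c : P2 F) : a \in S -> b \in S -> c \in S ->
  a != b -> a != c -> b != c -> a \in pline l -> b \in pline l -> c \in pline l ->
  (3 <= #|S :&: pline l|)%N.
Proof.
move=> aS bS cS ab ac bc al bl cl.
apply: (@leq_trans #|[set a; b; c]|).
  by rewrite -setUA cardsU1 cards2 bc !inE negb_or ab ac.
apply: subset_leq_card; apply/subsetP => x.
rewrite -setUA => /setU1P[->|/set2P[]->]; rewrite in_setI;
  by apply/andP; split.
Qed.

Lemma notri2 S (P x y : P2 F) l : no_trisecant_through S P -> l != 0 ->
  P \in S -> P \in pline l -> x \in S -> y \in S -> x \in pline l -> y \in pline l ->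
  x != P -> y != P -> x = y.
Proof.
move=> nt l0 PS Pl xS yS xl yl xP yP; apply/eqP/negPn/negP => xy.
have := nt l l0 Pl; rewrite ltnNge (three PS xS yS) //.
- by rewrite eq_sym.
- by rewrite eq_sym.
Qed.

Lemma line_nz (A : 'M[F]_3) a b c : A \in unitmx -> (a != 0) || (b != 0) || (c != 0) ->
  A *m col3 a b c != 0.
Proof.
move=> U nz; apply/negP => /eqP e.
have : col3 a b c = 0 by rewrite -(mulKmx U (col3 a b c)) e mulmx0.
move/matrixP => h; move: nz.
have := h 0 0; have := h 1 0; have := h 2 0; rewrite !mxE /= => -> -> ->.
by rewrite eqxx.
Qed.

End Main.


Section Main2.
Variable F : finFieldType.
Implicit Types S : {set P2 F}.

Lemma main_part S (P Q : P2 F) : #|S| = (#|F| + 2)%N -> P \in S -> Q \in S -> P != Q ->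
  no_trisecant_through S P ->
  exists A : 'M[F]_3, A \in unitmx /\ exists f : {poly F},
    pimage A S = Sf f /\ (no_trisecant_through S Q -> bijective (fun c => f.[c])).
Proof.
move=> cS PS QS PQ ntP.
have vPQ : val P != val Q by apply: contra PQ => /eqP/val_inj ->.
have [A [U wQ wP]] := frame (valP P) (valP Q) vPQ.
exists A; split => //.
pose S' := S :\ P :\ Q.
have S'P y : y \in S' -> [/\ y \in S, y != P & y != Q].
  by rewrite !inE => /and3P[].
have cS' : #|S'| = #|F|.
  move: cS; rewrite (cardsD1 P) PS (cardsD1 Q) !inE eq_sym PQ QS.
  by rewrite !add1n addn2 => -[].
have lnz a b c : (a != 0) || (b != 0) || (c != 0) -> A *m col3 a b c != 0.
  by move=> h; apply: line_nz.
have PonE a b c : (P \in pline (A *m col3 a b c)) = (b == 0).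
  by rewrite in_pline wP !mk3E /= !mul0r mul1r add0r addr0.
have QonE a b c : (Q \in pline (A *m col3 a b c)) = (a == 0).
  by rewrite in_pline wQ !mk3E /= !mul0r mul1r addr0 addr0.
have w2 y : y \in S' -> (val y *m A) 0 2 != 0.
  move=> /S'P[yS yP yQ]; apply/negP => /eqP y2.
  have yl : y \in pline (A *m col3 0 0 1) by rewrite in_pline y2 !mulr0 mul0r !addr0.
  have := notri2 ntP (lnz 0 0 1 _) PS _ QS yS _ yl _ yP.
  rewrite PonE QonE !eqxx oner_eq0 orbT eq_sym PQ => /(_ isT isT isT isT) yQ'.
  by rewrite yQ' eqxx in yQ.
pose h (y : P2 F) := (val y *m A) 0 0 / (val y *m A) 0 2.
pose t (y : P2 F) := (val y *m A) 0 1 / (val y *m A) 0 2.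
have wE y : y \in S' -> val y *m A = ((val y *m A) 0 2) *: mk3 (h y) (t y) 1.
  move=> yS'; have nz := w2 y yS'; rewrite /h /t.
  move: nz; set w := val y *m A => nz.
  apply/rowP => j; rewrite [RHS]mxE mk3E.
  case: j => [[|[|[|//]]] Hj] /=; rewrite ?mulr1.
  - by rewrite mulrC divfK //; congr (w 0 _); apply: val_inj.
  - by rewrite mulrC divfK //; congr (w 0 _); apply: val_inj.
  - by congr (w 0 _); apply: val_inj.
have onl z c : z \in S' -> h z = c -> z \in pline (A *m col3 1 0 (- c)).
  by move=> zS' <-; rewrite in_pline (wE z zS') !mxE /=; apply/eqP; ring.
have onl2 z c : z \in S' -> t z = c -> z \in pline (A *m col3 0 1 (- c)).
  by move=> zS' <-; rewrite in_pline (wE z zS') !mxE /=; apply/eqP; ring.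
have hinj : {in S' &, injective h}.
  move=> y y' yS' y'S' hy.
  have [yS yP _] := S'P y yS'; have [y'S y'P _] := S'P y' y'S'.
  apply: (notri2 ntP (lnz 1 0 (- h y) _) PS _ yS y'S (onl y _ yS' erefl) (onl y' _ y'S' (esym hy)) yP y'P).
    by rewrite oner_eq0.
  by rewrite PonE.
have hsurj : h @: S' = [set: F].
  apply/eqP; rewrite eqEcard subsetT cardsT card_in_imset // cS'.
  by rewrite /= leqnn.
pose g c := if [pick y in S' | h y == c] is Some y then t y else 0.
have gE y : y \in S' -> g (h y) = t y.
  move=> yS'; rewrite /g; case: pickP => [y' /andP[y'S' /eqP hy']|none].
    by rewrite (hinj _ _ y'S' yS' hy').
  by move: (none y); rewrite yS' eqxx.
have [f fE] := interp g.
have hS c : exists2 y, y \in S' & c = h y.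
  by apply/imsetP; rewrite hsurj inE.
exists f; split.
  apply/setP => x; rewrite !inE; apply/idP/idP.
    move=> /existsP[y /andP[yS pyx]].
    have [yP|yP] := eqVneq y P.
      rewrite yP wP in pyx.
      by rewrite (peq_normal (pnormal_e2 F) (valP x) pyx (esym (scale1r _))) eqxx !orbT.
    have [yQ|yQ] := eqVneq y Q.
      rewrite yQ wQ in pyx.
      by rewrite (peq_normal (pnormal_e1 F) (valP x) pyx (esym (scale1r _))) eqxx !orbT.
    have yS' : y \in S' by rewrite !inE yP yQ yS.
    rewrite (peq_normal (pnormal_mk3 _ _) (valP x) pyx (wE y yS')).
    by apply/orP; left; apply/existsP; exists (h y); rewrite fE gE.
  move=> /or3P[/existsP[c /eqP xe]|/eqP xe|/eqP xe]; apply/existsP.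
  - have [y yS' cE] := hS c; rewrite cE in xe; have [yS _ _] := S'P y yS'.
    exists y; rewrite yS /=; apply/existsP; exists ((val y *m A) 0 2).
    by rewrite w2 //= xe fE gE // -wE.
  - exists Q; rewrite QS /=; apply/existsP; exists 1.
    by rewrite oner_eq0 wQ xe scale1r eqxx.
  - exists P; rewrite PS /=; apply/existsP; exists 1.
    by rewrite oner_eq0 wP xe scale1r eqxx.
move=> ntQ; apply: injF_bij => c1 c2 /=; rewrite !fE.
have [y1 y1S' ->] := hS c1; have [y2 y2S' ->] := hS c2.
have [y1S _ y1Q] := S'P y1 y1S'; have [y2S _ y2Q] := S'P y2 y2S'.
rewrite !gE // => e.
congr h.
apply: (notri2 ntQ (lnz 0 1 (- t y1) _) QS _ y1S y2S (onl2 y1 _ y1S' erefl) (onl2 y2 _ y2S' (esym e)) y1Q y2Q).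
  by rewrite oner_eq0 orbT.
by rewrite QonE.
Qed.
End Main2.


Theorem lemma2p1 (F : finFieldType) (S : {set P2 F}) :
  #|S| = (#|F| + 2)%N ->
  ((exists2 P, P \in S & no_trisecant_through S P) ->
     exists A : 'M[F]_3, A \in unitmx /\ exists f : {poly F}, pimage A S = Sf f) /\
  ((exists P1 P2, [/\ P1 \in S, P2 \in S, P1 != P2,
                     no_trisecant_through S P1 & no_trisecant_through S P2]) ->
     exists A : 'M[F]_3, A \in unitmx /\
       exists f : {poly F}, bijective (fun c : F => f.[c]) /\ pimage A S = Sf f).
Proof.
move=> cS; split.
  move=> [P PS ntP].
  have : (0 < #|S :\ P|)%N by move: cS; rewrite (cardsD1 P) PS addn2 add1n => -[->].
  rewrite card_gt0 => /set0Pn[Q]; rewrite !inE => /andP[QP QS].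
  have PQ : P != Q by rewrite eq_sym.
  have [A [U [f [e _]]]] := main_part cS PS QS PQ ntP.
  by exists A; split => //; exists f.
move=> [P1 [P2' [P1S P2S P12 nt1 nt2]]].
have [A [U [f [e b]]]] := main_part cS P1S P2S P12 nt1.
by exists A; split => //; exists f; split => //; apply: b.
Qed.
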